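(* Let $\mathbb C$ be a pointed normal Mal'tsev category with finite limits and finite colimits, and let $w\colon W\to A$, $x\colon X\to A$, $y\colon Y\to A$ be morphisms. Then the following are equivalent: (a) $[(X,x),(Y,y)]_{(W,w)}=0$; (b) there exists a unique internal multiplication $X\times Y\to A$ over $(W,w)$.
   Context: A Mal'tsev category is a finitely complete category in which every reflexive relation is an equivalence relation; a normal category is a regular pointed category in which every regular epimorphism is a normal epimorphism. Notation: $\iota_i$ coproduct injections, $[a,b]$, $[a,b,c]$ copairings, $\langle a,b\rangle$ pairing, $1$, $0$ identity and zero morphisms. $(W+X)\times_W(W+Y)$ is the pullback of $[1,0]\colon W+X\to W$ and $[1,0]\colon W+Y\to W$. An internal multiplication $X\times Y\to A$ over $(W,w)$ is a morphism $m\colon (W+X)\times_W(W+Y)\to A$ with $m\langle 1,\iota_1[1,0]\rangle=[w,x]$ and $m\langle \iota_1[1,0],1\rangle=[w,y]$. The $(W,w)$-weighted subobject commutator $[(X,x),(Y,y)]_{(W,w)}\to A$ is the image (in the (regular epi, mono) factorization, equivalently (extremal epi, mono)) under $[w,x,y]\colon W+X+Y\to A$ of the kernel of $\langle [\iota_1,\iota_2,0],[\iota_1,0,\iota_2]\rangle\colon W+X+Y\to (W+X)\times_W(W+Y)$; writing it $=0$ means it is the zero subobject. *)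

(* Defs.v *)
Record Category := {
  Ob :> Type;
  Hom : Ob -> Ob -> Type;
  idm : forall A, Hom A A;
  comp : forall A B C, Hom B C -> Hom A B -> Hom A C;
  comp_idl : forall A B (f : Hom A B), comp A B B (idm B) f = f;
  comp_idr : forall A B (f : Hom A B), comp A A B f (idm A) = f;
  comp_assoc : forall A B C D (f : Hom A B) (g : Hom B C) (h : Hom C D),
      comp A C D h (comp A B C g f) = comp A B D (comp B C D h g) f
}.

Arguments Hom {c} _ _.
Arguments idm {c} A.
Arguments comp {c A B C} _ _.

Declare Scope cat_scope.
Open Scope cat_scope.
Notation "g ∘ f" := (comp g f) (at level 40, left associativity) : cat_scope.

Section Basic.
Context {C : Category}.

Definition mono {A B : C} (f : Hom A B) : Prop :=
  forall T (g h : Hom T A), f ∘ g = f ∘ h -> g = h.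

Definition is_terminal (T : C) : Prop := forall A : C, exists! f : Hom A T, True.
Definition is_initial (I : C) : Prop := forall A : C, exists! f : Hom I A, True.
Definition is_zero_object (Z : C) : Prop := is_initial Z /\ is_terminal Z.

Definition is_zero_mor {A B : C} (f : Hom A B) : Prop :=
  exists (Z : C) (u : Hom A Z) (v : Hom Z B), is_zero_object Z /\ f = v ∘ u.

Definition is_pullback {A B D : C} (f : Hom A D) (g : Hom B D)
    (P : C) (p1 : Hom P A) (p2 : Hom P B) : Prop :=
  f ∘ p1 = g ∘ p2 /\
  forall (T : C) (a : Hom T A) (b : Hom T B), f ∘ a = g ∘ b ->
    exists! h : Hom T P, p1 ∘ h = a /\ p2 ∘ h = b.

Definition is_pushout {D A B : C} (f : Hom D A) (g : Hom D B)
    (Q : C) (q1 : Hom A Q) (q2 : Hom B Q) : Prop :=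
  q1 ∘ f = q2 ∘ g /\
  forall (T : C) (a : Hom A T) (b : Hom B T), a ∘ f = b ∘ g ->
    exists! h : Hom Q T, h ∘ q1 = a /\ h ∘ q2 = b.

Definition has_pullbacks : Prop :=
  forall (A B D : C) (f : Hom A D) (g : Hom B D),
    exists P (p1 : Hom P A) (p2 : Hom P B), is_pullback f g P p1 p2.

Definition has_pushouts : Prop :=
  forall (D A B : C) (f : Hom D A) (g : Hom D B),
    exists Q (q1 : Hom A Q) (q2 : Hom B Q), is_pushout f g Q q1 q2.

Definition finitely_complete : Prop := (exists T : C, is_terminal T) /\ has_pullbacks.
Definition finitely_cocomplete : Prop := (exists I : C, is_initial I) /\ has_pushouts.

Definition is_coequalizer {T X Q : C} (a b : Hom T X) (e : Hom X Q) : Prop :=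
  e ∘ a = e ∘ b /\
  forall (Z : C) (g : Hom X Z), g ∘ a = g ∘ b -> exists! h : Hom Q Z, h ∘ e = g.

Definition regular_epi {X Q : C} (e : Hom X Q) : Prop :=
  exists (T : C) (a b : Hom T X), is_coequalizer a b e.

Definition normal_epi {X Q : C} (e : Hom X Q) : Prop :=
  exists (K : C) (k : Hom K X), is_zero_mor (e ∘ k) /\
    forall (Z : C) (g : Hom X Z), is_zero_mor (g ∘ k) -> exists! h : Hom Q Z, h ∘ e = g.

Definition is_kernel {K X B : C} (f : Hom X B) (k : Hom K X) : Prop :=
  is_zero_mor (f ∘ k) /\
  forall (T : C) (g : Hom T X), is_zero_mor (f ∘ g) -> exists! h : Hom T K, k ∘ h = g.

Definition is_pointed : Prop := exists Z : C, is_zero_object Z.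

Definition is_regular : Prop :=
  finitely_complete /\
  (forall (A B : C) (f : Hom A B), exists (I : C) (e : Hom A I) (m : Hom I B),
      regular_epi e /\ mono m /\ f = m ∘ e) /\
  (forall (A B D : C) (e : Hom A D) (f : Hom B D) (P : C) (p1 : Hom P A) (p2 : Hom P B),
      regular_epi e -> is_pullback e f P p1 p2 -> regular_epi p2).

Definition is_normal : Prop :=
  is_regular /\ is_pointed /\
  forall (A B : C) (e : Hom A B), regular_epi e -> normal_epi e.

(* Internal relations on X: jointly monic spans r1, r2 : R -> X *)
Definition jointly_monic {R X : C} (r1 r2 : Hom R X) : Prop :=
  forall T (g h : Hom T R), r1 ∘ g = r1 ∘ h -> r2 ∘ g = r2 ∘ h -> g = h.

Definition rel_reflexive {R X : C} (r1 r2 : Hom R X) : Prop :=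
  exists d : Hom X R, r1 ∘ d = idm X /\ r2 ∘ d = idm X.

Definition rel_symmetric {R X : C} (r1 r2 : Hom R X) : Prop :=
  exists s : Hom R R, r1 ∘ s = r2 /\ r2 ∘ s = r1.

Definition rel_transitive {R X : C} (r1 r2 : Hom R X) : Prop :=
  forall (P : C) (p1 p2 : Hom P R), is_pullback r2 r1 P p1 p2 ->
    exists t : Hom P R, r1 ∘ t = r1 ∘ p1 /\ r2 ∘ t = r2 ∘ p2.

Definition is_maltsev : Prop :=
  finitely_complete /\
  forall (R X : C) (r1 r2 : Hom R X), jointly_monic r1 r2 ->
    rel_reflexive r1 r2 ->
    rel_reflexive r1 r2 /\ rel_symmetric r1 r2 /\ rel_transitive r1 r2.

End Basic.

Record ZeroObject (C : Category) := {
  zobj : C;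
  zobj_zero : is_zero_object zobj;
  to_z : forall A : C, Hom A zobj;
  from_z : forall A : C, Hom zobj A
}.

Arguments zobj {C} z.
Arguments to_z {C} z A.
Arguments from_z {C} z A.

Definition zmor {C : Category} (Z : ZeroObject C) (A B : C) : Hom A B :=
  from_z Z B ∘ to_z Z A.

Record Coproduct {C : Category} (A B : C) := {
  cp_obj :> C;
  inj1 : Hom A cp_obj;
  inj2 : Hom B cp_obj;
  copair : forall T : C, Hom A T -> Hom B T -> Hom cp_obj T;
  copair_inj1 : forall T (f : Hom A T) (g : Hom B T), copair T f g ∘ inj1 = f;
  copair_inj2 : forall T (f : Hom A T) (g : Hom B T), copair T f g ∘ inj2 = g;
  copair_unique : forall T (h : Hom cp_obj T), h = copair T (h ∘ inj1) (h ∘ inj2)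
}.
Arguments copair {C A B} c {T} _ _.
Arguments inj1 {C A B} c.
Arguments inj2 {C A B} c.

Record Coproduct3 {C : Category} (A B D : C) := {
  cp3_obj :> C;
  inj3_1 : Hom A cp3_obj;
  inj3_2 : Hom B cp3_obj;
  inj3_3 : Hom D cp3_obj;
  copair3 : forall T : C, Hom A T -> Hom B T -> Hom D T -> Hom cp3_obj T;
  copair3_1 : forall T f g h, copair3 T f g h ∘ inj3_1 = f;
  copair3_2 : forall T f g h, copair3 T f g h ∘ inj3_2 = g;
  copair3_3 : forall T f g h, copair3 T f g h ∘ inj3_3 = h;
  copair3_unique : forall T (k : Hom cp3_obj T),
      k = copair3 T (k ∘ inj3_1) (k ∘ inj3_2) (k ∘ inj3_3)
}.
Arguments copair3 {C A B D} c {T} _ _ _.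

(* Main.v *)
Require Import Defs.

Section Gen.
Context {C : Category}.

Lemma assoc {A B D E : C} (f : Hom A B) (g : Hom B D) (h : Hom D E) :
  h ∘ (g ∘ f) = (h ∘ g) ∘ f.
Proof. apply comp_assoc. Qed.
Lemma idl {A B : C} (f : Hom A B) : idm B ∘ f = f. Proof. apply comp_idl. Qed.
Lemma idr {A B : C} (f : Hom A B) : f ∘ idm A = f. Proof. apply comp_idr. Qed.

Lemma term_uniq {T A : C} : is_terminal T -> forall f g : Hom A T, f = g.
Proof. intros H f g. destruct (H A) as [u [_ Hu]].
  rewrite <- (Hu f Logic.I), <- (Hu g Logic.I). reflexivity. Qed.
Lemma init_uniq {I0 A : C} : is_initial I0 -> forall f g : Hom I0 A, f = g.
Proof. intros H f g. destruct (H A) as [u [_ Hu]].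
  rewrite <- (Hu f Logic.I), <- (Hu g Logic.I). reflexivity. Qed.

Lemma pb_pair {A B D P : C} {f : Hom A D} {g : Hom B D} {p1 : Hom P A} {p2 : Hom P B}
  (H : is_pullback f g P p1 p2) {T} (a : Hom T A) (b : Hom T B) :
  f ∘ a = g ∘ b -> exists h, p1 ∘ h = a /\ p2 ∘ h = b.
Proof. intros E. destruct (proj2 H T a b E) as [h [Hh _]]. eauto. Qed.

Lemma pb_jm {A B D P : C} {f : Hom A D} {g : Hom B D} {p1 : Hom P A} {p2 : Hom P B}
  (H : is_pullback f g P p1 p2) {T} (h h' : Hom T P) :
  p1 ∘ h = p1 ∘ h' -> p2 ∘ h = p2 ∘ h' -> h = h'.
Proof. intros E1 E2.
  assert (E : f ∘ (p1 ∘ h') = g ∘ (p2 ∘ h')) by (rewrite !assoc, (proj1 H); reflexivity).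
  destruct (proj2 H T _ _ E) as [u [_ Hu]].
  rewrite <- (Hu h (conj E1 E2)), <- (Hu h' (conj eq_refl eq_refl)). reflexivity. Qed.

Lemma copair_comp {A B : C} (c : Coproduct A B) {T T'} (f : Hom A T) (g : Hom B T) (h : Hom T T') :
  h ∘ copair c f g = copair c (h ∘ f) (h ∘ g).
Proof.
  transitivity (copair c ((h ∘ copair c f g) ∘ inj1 c) ((h ∘ copair c f g) ∘ inj2 c)).
  apply copair_unique. rewrite <- !assoc, copair_inj1, copair_inj2; reflexivity. Qed.

Lemma copair_id {A B : C} (c : Coproduct A B) : copair c (inj1 c) (inj2 c) = idm c.
Proof.
  transitivity (copair c (idm _ ∘ inj1 c) (idm _ ∘ inj2 c)).
  rewrite !idl; reflexivity. symmetry; apply copair_unique. Qed.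

Lemma copair3_comp {A B D : C} (c : Coproduct3 A B D) {T T'} f g k (h : Hom T T') :
  h ∘ copair3 c f g k = copair3 c (h ∘ f) (h ∘ g) (h ∘ k).
Proof.
  transitivity (copair3 c ((h ∘ copair3 c f g k) ∘ inj3_1 _ _ _ c)
     ((h ∘ copair3 c f g k) ∘ inj3_2 _ _ _ c) ((h ∘ copair3 c f g k) ∘ inj3_3 _ _ _ c)).
  apply copair3_unique. rewrite <- !assoc, copair3_1, copair3_2, copair3_3; reflexivity. Qed.

Variable Z : ZeroObject C.

Lemma zmor_r {A B D : C} (f : Hom A B) : zmor Z B D ∘ f = zmor Z A D.
Proof. unfold zmor. rewrite <- assoc. f_equal. apply term_uniq, zobj_zero. Qed.
Lemma zmor_l {A B D : C} (f : Hom B D) : f ∘ zmor Z A B = zmor Z A D.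
Proof. unfold zmor. rewrite assoc. f_equal. apply init_uniq, zobj_zero. Qed.

Lemma zero_mor_eq {A B : C} (f : Hom A B) : is_zero_mor f -> f = zmor Z A B.
Proof.
  intros [Z' [u [v [[Hi Ht] ->]]]].
  assert (E1 : v ∘ from_z Z Z' = from_z Z B) by (apply init_uniq; apply zobj_zero).
  assert (E2 : to_z Z Z' ∘ u = to_z Z A) by (apply term_uniq; apply zobj_zero).
  assert (E3 : from_z Z Z' ∘ to_z Z Z' = idm Z') by (apply (term_uniq Ht)).
  unfold zmor. rewrite <- E1, <- E2, <- assoc, (assoc u (to_z Z Z') (from_z Z Z')), E3, idl.
  reflexivity. Qed.

Lemma zmor_zero {A B : C} : is_zero_mor (zmor Z A B).
Proof. exists (zobj Z), (to_z Z A), (from_z Z B). split; [apply zobj_zero|reflexivity]. Qed.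

End Gen.
Theorem theorem2p5 (C : Category) (Z : ZeroObject C)
  (HN : is_normal (C := C)) (HM : is_maltsev (C := C))
  (HL : finitely_complete (C := C)) (HCL : finitely_cocomplete (C := C))
  (W X Y A : C) (w : Hom W A) (x : Hom X A) (y : Hom Y A)
  (WX : Coproduct W X) (WY : Coproduct W Y) (WXY : Coproduct3 W X Y)
  (* P = (W+X) x_W (W+Y), pullback of [1,0] and [1,0] *)
  (P : C) (p1 : Hom P WX) (p2 : Hom P WY)
  (HP : is_pullback (copair WX (idm W) (zmor Z X W))
                    (copair WY (idm W) (zmor Z Y W)) P p1 p2)
  (* phi = < [i1,i2,0], [i1,0,i2] > : W+X+Y -> P *)
  (phi : Hom WXY P)
  (Hphi1 : p1 ∘ phi = copair3 WXY (inj1 WX) (inj2 WX) (zmor Z Y WX))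
  (Hphi2 : p2 ∘ phi = copair3 WXY (inj1 WY) (zmor Z X WY) (inj2 WY))
  (* k : K -> W+X+Y a kernel of phi *)
  (K : C) (k : Hom K WXY) (Hk : is_kernel phi k)
  (* (regular epi, mono) factorization of [w,x,y] o k; m is the commutator *)
  (I : C) (e : Hom K I) (m : Hom I A)
  (He : regular_epi e) (Hm : mono m)
  (Hfact : copair3 WXY w x y ∘ k = m ∘ e) :
  is_zero_object I <->
  exists! mu : Hom P A,
    (forall h : Hom WX P,
        p1 ∘ h = idm WX /\ p2 ∘ h = inj1 WY ∘ copair WX (idm W) (zmor Z X W) ->
        mu ∘ h = copair WX w x) /\
    (forall h : Hom WY P,
        p1 ∘ h = inj1 WX ∘ copair WY (idm W) (zmor Z Y W) /\ p2 ∘ h = idm WY ->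
        mu ∘ h = copair WY w y).
Proof.
  set (fX := copair WX (idm W) (zmor Z X W)) in *.
  set (fY := copair WY (idm W) (zmor Z Y W)) in *.
  set (j1 := copair WX (inj3_1 _ _ _ WXY) (inj3_2 _ _ _ WXY)).
  set (j2 := copair WY (inj3_1 _ _ _ WXY) (inj3_3 _ _ _ WXY)).
  assert (HPc : fX ∘ p1 = fY ∘ p2) by apply (proj1 HP).
  assert (F1 : p1 ∘ (phi ∘ j1) = idm WX).
  { rewrite assoc, Hphi1. unfold j1. rewrite copair_comp, copair3_1, copair3_2. apply copair_id. }
  assert (F2 : p2 ∘ (phi ∘ j1) = inj1 WY ∘ fX).
  { rewrite assoc, Hphi2. unfold j1, fX. rewrite !copair_comp, copair3_1, copair3_2, idr, zmor_l.
    reflexivity. }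
  assert (F3 : p1 ∘ (phi ∘ j2) = inj1 WX ∘ fY).
  { rewrite assoc, Hphi1. unfold j2, fY. rewrite !copair_comp, copair3_1, copair3_3, idr, zmor_l.
    reflexivity. }
  assert (F4 : p2 ∘ (phi ∘ j2) = idm WY).
  { rewrite assoc, Hphi2. unfold j2. rewrite copair_comp, copair3_1, copair3_3. apply copair_id. }
  assert (F5 : copair3 WXY w x y ∘ j1 = copair WX w x).
  { unfold j1. rewrite copair_comp, copair3_1, copair3_2. reflexivity. }
  assert (F6 : copair3 WXY w x y ∘ j2 = copair WY w y).
  { unfold j2. rewrite copair_comp, copair3_1, copair3_3. reflexivity. }
  assert (fXi : fX ∘ inj1 WX = idm W) by apply copair_inj1.
  assert (fYi : fY ∘ inj1 WY = idm W) by apply copair_inj1.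
  assert (LB : forall mu : Hom P A,
    (forall h : Hom WX P,
        p1 ∘ h = idm WX /\ p2 ∘ h = inj1 WY ∘ fX -> mu ∘ h = copair WX w x) /\
    (forall h : Hom WY P,
        p1 ∘ h = inj1 WX ∘ fY /\ p2 ∘ h = idm WY -> mu ∘ h = copair WY w y) ->
    mu ∘ phi = copair3 WXY w x y).
  { intros mu [H1 H2].
    specialize (H1 (phi ∘ j1) (conj F1 F2)). specialize (H2 (phi ∘ j2) (conj F3 F4)).
    transitivity (copair3 WXY ((mu ∘ phi) ∘ inj3_1 _ _ _ WXY) ((mu ∘ phi) ∘ inj3_2 _ _ _ WXY)
                   ((mu ∘ phi) ∘ inj3_3 _ _ _ WXY)).
    apply copair3_unique.
    assert (E1 : j1 ∘ inj1 WX = inj3_1 _ _ _ WXY) by apply copair_inj1.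
    assert (E2 : j1 ∘ inj2 WX = inj3_2 _ _ _ WXY) by apply copair_inj2.
    assert (E3 : j2 ∘ inj2 WY = inj3_3 _ _ _ WXY) by apply copair_inj2.
    rewrite <- E1, <- E2, <- E3, !assoc, <- (assoc j1 phi mu), <- (assoc j2 phi mu), H1, H2,
      !copair_inj1, !copair_inj2. reflexivity. }
  assert (Hreg : regular_epi phi).
  { destruct HN as [[HLc [Hfac _]] _].
    destruct HM as [_ HMal].
    destruct HL as [_ Hpb].
    destruct (Hfac _ _ phi) as [M [e' [m' [He' [Hm' Hphi]]]]].
    set (q := fX ∘ (p1 ∘ m')).
    destruct (Hpb _ _ _ q q) as [Q [a1 [a2 HQ]]].
    assert (Eρ : fX ∘ ((p1 ∘ m') ∘ a1) = fY ∘ ((p2 ∘ m') ∘ a2)).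
    { rewrite !assoc, <- HPc. rewrite <- (assoc m' p1 fX). exact (proj1 HQ). }
    destruct (pb_pair HP _ _ Eρ) as [rho [Hr1 Hr2]].
    destruct (Hpb _ _ _ m' rho) as [S [c1 [c2 HS]]].
    assert (JM : jointly_monic (a1 ∘ c2) (a2 ∘ c2)).
    { intros T g h E1 E2.
      assert (Hc2 : c2 ∘ g = c2 ∘ h) by (apply (pb_jm HQ); rewrite !assoc; assumption).
      assert (Hc1 : c1 ∘ g = c1 ∘ h).
      { apply Hm'. rewrite !assoc, (proj1 HS), <- !assoc, Hc2; reflexivity. }
      apply (pb_jm HS); assumption. }
    destruct (pb_pair HQ (idm M) (idm M) eq_refl) as [D [HD1 HD2]].
    assert (ED : m' ∘ idm M = rho ∘ D).
    { rewrite idr. apply (pb_jm HP).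
      - rewrite (assoc D rho p1), Hr1, <- assoc, HD1, idr. reflexivity.
      - rewrite (assoc D rho p2), Hr2, <- assoc, HD2, idr. reflexivity. }
    destruct (pb_pair HS (idm M) D ED) as [d [Hd1 Hd2]].
    assert (Hrefl : rel_reflexive (a1 ∘ c2) (a2 ∘ c2)).
    { exists d. rewrite <- !assoc, Hd2, HD1, HD2. split; reflexivity. }
    destruct (HMal S M _ _ JM Hrefl) as [_ [[sg [Hs1 Hs2]] _]].
    assert (Mphi : m' ∘ e' = phi) by (symmetry; exact Hphi).
    set (u0 := e' ∘ (j1 ∘ p1)). set (v0 := e' ∘ (j2 ∘ p2)).
    assert (Mu0 : m' ∘ u0 = (phi ∘ j1) ∘ p1) by (unfold u0; rewrite !assoc, Mphi; reflexivity).
    assert (Mv0 : m' ∘ v0 = (phi ∘ j2) ∘ p2) by (unfold v0; rewrite !assoc, Mphi; reflexivity).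
    assert (Et0 : q ∘ v0 = q ∘ u0).
    { unfold q. rewrite <- !assoc, Mv0, Mu0, (assoc p2 (phi ∘ j2) p1), (assoc p1 (phi ∘ j1) p1), F1, F3,
        idl, !assoc, fXi, idl. symmetry; exact HPc. }
    destruct (pb_pair HQ v0 u0 Et0) as [t0 [Ht1 Ht2]].
    set (z1 := e' ∘ (j1 ∘ (inj1 WX ∘ (fX ∘ p1)))).
    assert (Mz1 : m' ∘ z1 = (phi ∘ j1) ∘ (inj1 WX ∘ (fX ∘ p1)))
      by (unfold z1; rewrite !assoc, Mphi; reflexivity).
    assert (Ez : m' ∘ z1 = rho ∘ t0).
    { apply (pb_jm HP).
      - rewrite Mz1, (assoc t0 rho p1), Hr1, (assoc _ (phi ∘ j1) p1), F1, idl, <- (assoc t0 a1), Ht1,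
          <- (assoc v0 m' p1), Mv0, (assoc p2 (phi ∘ j2) p1), F3, <- assoc, <- HPc. reflexivity.
      - rewrite Mz1, (assoc t0 rho p2), Hr2, (assoc _ (phi ∘ j1) p2), F2, <- (assoc t0 a2), Ht2,
          <- (assoc u0 m' p2), Mu0, (assoc p1 (phi ∘ j1) p2), F2, <- !assoc, (assoc _ (inj1 WX) fX), fXi, idl.
        rewrite !assoc; reflexivity. }
    destruct (pb_pair HS z1 t0 Ez) as [s0 [Hs01 Hs02]].
    assert (U1 : a1 ∘ (c2 ∘ (sg ∘ s0)) = u0).
    { rewrite (assoc (sg ∘ s0)), (assoc s0), Hs1, <- assoc, Hs02, Ht2. reflexivity. }
    assert (U2 : a2 ∘ (c2 ∘ (sg ∘ s0)) = v0).
    { rewrite (assoc (sg ∘ s0)), (assoc s0), Hs2, <- assoc, Hs02, Ht1. reflexivity. }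
    assert (Rid : rho ∘ (c2 ∘ (sg ∘ s0)) = idm P).
    { apply (pb_jm HP).
      - rewrite assoc, Hr1, <- !assoc, U1, Mu0, assoc, F1, idl, idr. reflexivity.
      - rewrite assoc, Hr2, <- !assoc, U2, Mv0, assoc, F4, idl, idr. reflexivity. }
    set (zz := c1 ∘ (sg ∘ s0)).
    assert (Hzz1 : m' ∘ zz = idm P).
    { unfold zz. rewrite assoc, (proj1 HS), <- assoc. exact Rid. }
    assert (Hzz2 : zz ∘ m' = idm M).
    { apply Hm'. rewrite assoc, Hzz1, idl, idr. reflexivity. }
    destruct He' as [T [a [b [Hab Hcq]]]].
    exists T, a, b. split.
    - rewrite Hphi, <- !assoc, Hab. reflexivity.
    - intros Z0 g Hg. destruct (Hcq Z0 g Hg) as [h0 [Hh0 Hu0]].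
      exists (h0 ∘ zz). split.
      + rewrite Hphi, <- assoc, (assoc e' m' zz), Hzz2, idl. exact Hh0.
      + intros h' Hh'. rewrite (Hu0 (h' ∘ m')).
        * rewrite <- assoc, Hzz1, idr. reflexivity.
        * rewrite <- assoc, <- Hphi. exact Hh'. }
  assert (Coker : forall T (g : Hom WXY T), is_zero_mor (g ∘ k) -> exists! h, h ∘ phi = g).
  { intros T g Hg. destruct HN as [_ [_ Hne]].
    destruct (Hne _ _ phi Hreg) as [K' [k' [Hz Hu]]].
    destruct ((proj2 Hk) K' k' Hz) as [u [Hku _]].
    apply Hu. rewrite <- Hku, assoc, (zero_mor_eq Z _ Hg), zmor_r. apply zmor_zero. }
  split.
  - intros HI.
    assert (Hz : is_zero_mor (copair3 WXY w x y ∘ k)).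
    { rewrite Hfact. exists I, e, m. split; [exact HI | reflexivity]. }
    destruct (Coker A _ Hz) as [mu [Hmu Huniq]].
    exists mu. split; [split|].
    + intros h [Hh1 Hh2].
      assert (h = phi ∘ j1) by (apply (pb_jm HP); [rewrite Hh1, F1 | rewrite Hh2, F2]; reflexivity).
      subst h. rewrite assoc, Hmu, F5. reflexivity.
    + intros h [Hh1 Hh2].
      assert (h = phi ∘ j2) by (apply (pb_jm HP); [rewrite Hh1, F3 | rewrite Hh2, F4]; reflexivity).
      subst h. rewrite assoc, Hmu, F6. reflexivity.
    + intros mu' Hmu'. apply Huniq. apply LB. exact Hmu'.
  - intros [mu [Hmu _]].
    pose proof (LB mu Hmu) as HmuPhi.
    assert (Ez : m ∘ e = zmor Z K A).
    { rewrite <- Hfact, <- HmuPhi, <- assoc, (zero_mor_eq Z _ (proj1 Hk)), zmor_l. reflexivity. }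
    assert (He0 : e = zmor Z K I).
    { apply Hm. rewrite Ez, zmor_l. reflexivity. }
    assert (Hepi : forall Z0 (g h : Hom I Z0), g ∘ e = h ∘ e -> g = h).
    { destruct He as [T0 [a [b [Hab Hcq]]]].
      intros Z0 g h E.
      assert (E' : (g ∘ e) ∘ a = (g ∘ e) ∘ b) by (rewrite <- !assoc, Hab; reflexivity).
      destruct (Hcq Z0 (g ∘ e) E') as [u [_ Hu]].
      rewrite <- (Hu g eq_refl), <- (Hu h (eq_sym E)). reflexivity. }
    assert (Hid : idm I = zmor Z I I).
    { apply Hepi. rewrite idl, zmor_r. exact He0. }
    split.
    + intros T. exists (zmor Z I T). split; [trivial|].
      intros g _. apply Hepi. rewrite He0, !zmor_l. reflexivity.
    + intros T. exists (zmor Z T I). split; [trivial|].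
      intros g _. rewrite <- (idl g), Hid, zmor_r. reflexivity.
Qed.
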